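(* Let $c$ and $\gamma$ be constants, $\mathcal{Y}$ a tiny class, and $t:\mathbb{N}\to\mathbb{R}$ an increasing unbounded function with $t(n)\le n$ for all $n$. Let $L\subseteq\mathbb{N}$ be an infinite $t$-sparse set, and for every $\ell\in L$ let $\mathcal{M}_\ell$ be a set of $\ell$-vertex monotone $(c,\mathcal{Y},t)$-tiny graphs with $|\mathcal{M}_\ell|\le\gamma^{t(\ell)}$. Then $\mathrm{Mon}\big(\bigcup_{\ell\in L}\mathcal{M}_\ell\big)$ is a monotone tiny class.
   Context: A class (set of graphs closed under isomorphism) is monotone if closed under subgraphs; it is tiny if hereditary (closed under induced subgraphs) and for some constant $\beta$ it contains at most $\beta^n$ unlabeled $n$-vertex graphs for every $n$. $\mathrm{Mon}(\mathcal{C})$ is the smallest monotone class containing $\mathcal{C}$. $L$ is $t$-sparse if there is no pair $x\ne y$ in $L$ with $t(y)\le x\le y$. For a graph $G$, $s_k(G)$ is the number of unlabeled $k$-vertex subgraphs of $G$. An $n$-vertex graph $G$ is monotone $(c,\mathcal{Y},t)$-tiny if (1) for every integer $1\le k\le t(n)$, every $k$-vertex subgraph of $G$ belongs to $\mathcal{Y}$, and (2) for every integer $t(n)<k\le n$, $s_k(G)\le c^k$. *)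

(* Defs.v *)
From Stdlib Require Import Reals ClassicalEpsilon.
From mathcomp Require Import all_boot.
Set Implicit Arguments. Unset Strict Implicit. Unset Printing Implicit Defensive.

Definition sgraph (n : nat) :=
  { e : {ffun 'I_n * 'I_n -> bool} |
      [forall x, ~~ e (x, x)] && [forall x, forall y, e (x, y) == e (y, x)] }.

Definition adj (n : nat) (G : sgraph n) (x y : 'I_n) : bool := sval G (x, y).

Definition isob (n m : nat) (G : sgraph n) (H : sgraph m) : bool :=
  (n == m) && [exists f : {ffun 'I_n -> 'I_m},
    injectiveb f && [forall x, forall y, adj G x y == adj H (f x) (f y)]].

Definition subgraphb (k n : nat) (H : sgraph k) (G : sgraph n) : bool :=
  [exists f : {ffun 'I_k -> 'I_n},
    injectiveb f && [forall x, forall y, adj H x y ==> adj G (f x) (f y)]].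

Definition inducedb (k n : nat) (H : sgraph k) (G : sgraph n) : bool :=
  [exists f : {ffun 'I_k -> 'I_n},
    injectiveb f && [forall x, forall y, adj H x y == adj G (f x) (f y)]].

Definition gclass := forall n : nat, sgraph n -> Prop.

Definition iso_closed (C : gclass) : Prop :=
  forall n m (G : sgraph n) (H : sgraph m), isob G H -> C n G -> C m H.

Definition is_class (C : gclass) : Prop := iso_closed C.

Definition hereditary (C : gclass) : Prop :=
  is_class C /\
  forall n k (G : sgraph n) (H : sgraph k), inducedb H G -> C n G -> C k H.

Definition monotone (C : gclass) : Prop :=
  is_class C /\
  forall n k (G : sgraph n) (H : sgraph k), subgraphb H G -> C n G -> C k H.

Definition pb (P : Prop) : bool :=
  if excluded_middle_informative P then true else false.

Definition unl_count (C : gclass) (n : nat) : nat :=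
  #|equivalence_partition (@isob n n) [set G : sgraph n | pb (C n G)]|.

Definition tiny (C : gclass) : Prop :=
  hereditary C /\
  exists beta : R, forall n : nat, Rle (INR (unl_count C n)) (pow beta n).

Definition Mon (C : gclass) : gclass :=
  fun n G => forall D : gclass, monotone D ->
    (forall m (H : sgraph m), C m H -> D m H) -> D n G.

Definition s_k (k n : nat) (G : sgraph n) : nat :=
  #|equivalence_partition (@isob k k) [set H : sgraph k | subgraphb H G]|.

Definition monotone_tiny_graph (c : R) (Y : gclass) (t : nat -> R)
  (n : nat) (G : sgraph n) : Prop :=
  (forall k (H : sgraph k), (1 <= k)%N -> Rle (INR k) (t n) -> subgraphb H G -> Y k H)
  /\ (forall k : nat, Rlt (t n) (INR k) -> (k <= n)%N -> Rle (INR (s_k k G)) (pow c k)).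

Definition t_sparse (t : nat -> R) (L : nat -> Prop) : Prop :=
  forall x y : nat, L x -> L y -> x <> y -> ~ (Rle (t y) (INR x) /\ (x <= y)%N).

(* Main.v *)
Require Import Defs.
From Stdlib Require Import Reals Lra Psatz ClassicalEpsilon Classical.
From mathcomp Require Import all_boot.
Set Implicit Arguments. Unset Strict Implicit.
Delimit Scope R_scope with Re.

Lemma sub_refl n (G : sgraph n) : subgraphb G G.
Proof.
apply/existsP; exists [ffun x => x]; apply/andP; split.
  by apply/injectiveP => x y; rewrite !ffunE.
by apply/forallP => x; apply/forallP => y; rewrite !ffunE implybb.
Qed.

Lemma sub_trans k m n (H : sgraph k) (K : sgraph m) (G : sgraph n) :
  subgraphb H K -> subgraphb K G -> subgraphb H G.
Proof.
move=> /existsP [f /andP [/injectiveP fi /forallP fa]].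
move=> /existsP [g /andP [/injectiveP gi /forallP ga]].
apply/existsP; exists [ffun x => g (f x)]; apply/andP; split.
  by apply/injectiveP => x y; rewrite !ffunE => /gi /fi.
apply/forallP => x; apply/forallP => y; rewrite !ffunE.
apply/implyP => h.
have /forallP/(_ y)/implyP/(_ h) h2 := fa x.
by have /forallP/(_ (f y))/implyP/(_ h2) := ga (f x).
Qed.

Lemma iso_sub_rev n m (H : sgraph n) (H' : sgraph m) : isob H H' -> subgraphb H' H.
Proof.
case/andP => /eqP e; subst m => /existsP [f /andP [/injectiveP finj /forallP fa]].
apply/existsP; exists [ffun x => invF finj x]; apply/andP; split.
  by apply/injectiveP => x y; rewrite !ffunE; apply: (can_inj (f_invF finj)).
apply/forallP => x; apply/forallP => y; rewrite !ffunE.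
have /forallP/(_ (invF finj y))/eqP := fa (invF finj x).
by rewrite !f_invF => ->; rewrite implybb.
Qed.

Lemma iso_refl n (G : sgraph n) : isob G G.
Proof.
apply/andP; split => //; apply/existsP; exists [ffun x => x]; apply/andP; split.
  by apply/injectiveP => x y; rewrite !ffunE.
by apply/forallP => x; apply/forallP => y; rewrite !ffunE.
Qed.

Lemma iso_sym n (G H : sgraph n) : isob G H -> isob H G.
Proof.
case/andP => _ /existsP [f /andP [/injectiveP finj /forallP fa]].
apply/andP; split => //.
apply/existsP; exists [ffun x => invF finj x]; apply/andP; split.
  by apply/injectiveP => x y; rewrite !ffunE; apply: (can_inj (f_invF finj)).
apply/forallP => x; apply/forallP => y; rewrite !ffunE.
have /forallP/(_ (invF finj y))/eqP := fa (invF finj x).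
by rewrite !f_invF => ->.
Qed.

Lemma iso_trans n (G H K : sgraph n) : isob G H -> isob H K -> isob G K.
Proof.
case/andP => _ /existsP [f /andP [/injectiveP fi /forallP fa]].
case/andP => _ /existsP [g /andP [/injectiveP gi /forallP ga]].
apply/andP; split => //.
apply/existsP; exists [ffun x => g (f x)]; apply/andP; split.
  by apply/injectiveP => x y; rewrite !ffunE => /gi /fi.
apply/forallP => x; apply/forallP => y; rewrite !ffunE.
have /forallP/(_ y)/eqP -> := fa x.
by have /forallP/(_ (f y)) := ga (f x).
Qed.

Lemma sub_le k n (H : sgraph k) (G : sgraph n) : subgraphb H G -> (k <= n)%N.
Proof.
move=> /existsP [f /andP [/injectiveP fi _]].
by have := @leq_card _ _ f fi; rewrite !card_ord.
Qed.

Lemma ind_sub k n (H : sgraph k) (G : sgraph n) : inducedb H G -> subgraphb H G.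
Proof.
move=> /existsP [f /andP [fi /forallP fa]].
apply/existsP; exists f; rewrite fi /=.
apply/forallP => x; apply/forallP => y.
by have /forallP/(_ y)/eqP -> := fa x; rewrite implybb.
Qed.

Lemma sgraph0_eq (G H : sgraph 0) : G = H.
Proof. by apply: val_inj; apply/ffunP => -[[i ?] ?]. Qed.

Section Cnt.
Variables (T : finType) (R : rel T).
Hypotheses (Rr : reflexive R) (Rs : symmetric R) (Rt : transitive R).

Definition cls x := [set y | R x y].
Definition Ncl (A : {set T}) := #|cls @: A|.

Lemma cls_eq x y : R x y -> cls x = cls y.
Proof.
move=> h; apply/setP => z; rewrite !inE; apply/idP/idP => hz.
  by apply: Rt hz; rewrite Rs.
exact: Rt hz.
Qed.

Lemma part_Ncl (A : {set T}) : #|equivalence_partition R A| = Ncl A.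
Proof.
have -> : equivalence_partition R A = (fun S => S :&: A) @: (cls @: A).
  rewrite -imset_comp; apply: eq_imset => x /=.
  by apply/setP => y; rewrite !inE andbC.
apply: card_in_imset => S1 S2 /imsetP [x1 h1 ->] /imsetP [x2 h2 ->] e.
apply: cls_eq.
have : x2 \in cls x2 :&: A by rewrite !inE Rr h2.
by rewrite -e !inE => /andP [].
Qed.

Lemma Ncl_sub (A B : {set T}) : A \subset B -> Ncl A <= Ncl B.
Proof. by move=> h; apply/subset_leq_card/imsetS. Qed.

Lemma Ncl_U (A B : {set T}) : Ncl (A :|: B) <= Ncl A + Ncl B.
Proof. by rewrite /Ncl imsetU cardsU leq_subr. Qed.

Lemma Ncl_0 : Ncl set0 = 0.
Proof. by rewrite /Ncl imset0 cards0. Qed.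

Lemma Ncl_big (I : finType) (P : {set I}) (B : I -> {set T}) :
  Ncl (\bigcup_(i in P) B i) <= \sum_(i in P) Ncl (B i).
Proof.
apply: (big_ind2 (fun S k => Ncl S <= k)); first by rewrite Ncl_0.
  move=> x1 x2 y1 y2 h1 h2; apply: leq_trans (Ncl_U _ _) _; exact: leq_add.
by [].
Qed.
End Cnt.

Lemma sumR_le (I : finType) (P : {set I}) (F : I -> nat) (b : R) :
  (forall i, i \in P -> Rle (INR (F i)) b) ->
  Rle (INR (\sum_(i in P) F i)) (INR #|P| * b).
Proof.
move=> h; rewrite -sum1_card.
apply: (big_ind2 (fun s k => Rle (INR s) (INR k * b))).
- simpl; lra.
- move=> x1 x2 y1 y2 h1 h2; rewrite !plus_INR; lra.
- move=> i /h; simpl; lra.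
Qed.

Lemma pbP (P : Prop) : reflect P (pb P).
Proof. rewrite /pb; case: excluded_middle_informative => h; by constructor. Qed.

Local Open Scope R_scope.

Lemma rp_bound g a x n : 0 < g -> a <= x -> x < INR n ->
  Rpower g x <= (Rpower g a + 1) * (g + 1) ^ n.
Proof.
move=> g0 ax xn.
have P1 : 1 <= (g + 1) ^ n by apply: pow_R1_Rle; lra.
have K0 : 0 < Rpower g a by apply: exp_pos.
case: (Rle_lt_dec 1 g) => hg.
  have h1 : Rpower g x <= Rpower g (INR n) by apply: Rle_Rpower; lra.
  rewrite Rpower_pow // in h1.
  have h2 : g ^ n <= (g + 1) ^ n by apply: pow_incr; lra.
  nra.
have lg : ln g < 0 by rewrite -ln_1; apply: ln_increasing.
have h1 : Rpower g x <= Rpower g a.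
  rewrite /Rpower.
  have : x * ln g <= a * ln g by nra.
  case/Rle_lt_or_eq_dec => h; last by rewrite h; lra.
  by apply: Rlt_le; apply: exp_increasing.
nra.
Qed.

Lemma pow_add_le x y n : 0 <= x -> 0 <= y -> (1 <= n)%N -> x ^ n + y ^ n <= (x + y) ^ n.
Proof.
move=> x0 y0; elim: n => // [[|n]] IH _; first by simpl; lra.
have := IH erefl.
change ((x + y) ^ n.+2) with ((x + y) * (x + y) ^ n.+1).
change (x ^ n.+2) with (x * x ^ n.+1). change (y ^ n.+2) with (y * y ^ n.+1).
have := pow_le x n.+1 x0. have := pow_le y n.+1 y0. nra.
Qed.
Local Close Scope R_scope.

Theorem mainTheorem14 (c gamma : R) (Y : gclass) (t : nat -> R)
  (L : nat -> Prop) (M : forall l : nat, {set sgraph l}) :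
  Rlt 0 gamma ->
  tiny Y ->
  (forall m n : nat, (m <= n)%N -> Rle (t m) (t n)) ->
  (forall B : R, exists n : nat, Rlt B (t n)) ->
  (forall n : nat, Rle (t n) (INR n)) ->
  (forall N : nat, exists l, (N <= l)%N /\ L l) ->
  t_sparse t L ->
  (forall l, L l -> forall G : sgraph l, G \in M l -> monotone_tiny_graph c Y t G) ->
  (forall l, L l -> Rle (INR #|M l|) (Rpower gamma (t l))) ->
  let U : gclass := fun n G => L n /\ G \in M n in
  monotone (Mon U) /\ tiny (Mon U).
Proof.
move=> gpos tY tmono _ _ _ tsp Mtiny Mcard U.
have MU_iso : iso_closed (Mon U).
  by move=> n m G H iGH MG D mD UD; exact: (proj1 mD) _ _ G H iGH (MG D mD UD).
have MU_sub : forall n k (G : sgraph n) (H : sgraph k), subgraphb H G -> Mon U G -> Mon U H.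
  by move=> n k G H sHG MG D mD UD; exact: (proj2 mD) _ _ G H sHG (MG D mD UD).
have monU : monotone (Mon U) by split.
split => //; split.
  split => // n k G H /ind_sub; exact: MU_sub.
have MUchar : forall n (H : sgraph n), Mon U H ->
    exists l (G : sgraph l), L l /\ G \in M l /\ subgraphb H G.
  move=> n H MH; apply: (MH (fun n (H : sgraph n) => exists l (G : sgraph l), L l /\ G \in M l /\ subgraphb H G)).
    split.
      move=> n0 m G H' iGH' [l [G0 [Ll [GM sG]]]].
      exists l, G0; split => //; split => //; exact: sub_trans (iso_sub_rev iGH') sG.
    move=> n0 k G H' sHG [l [G0 [Ll [GM sG]]]].
    exists l, G0; split => //; split => //; exact: sub_trans sHG sG.
  move=> m H0 [Lm HM]; exists m, H0; split => //; split => //; exact: sub_refl.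
case: tY => _ [beta hbeta].
have isr : forall n, reflexive (@isob n n) by move=> n G; exact: iso_refl.
have iss : forall n, symmetric (@isob n n)
  by move=> n G H; apply/idP/idP; apply: iso_sym.
have ist : forall n, transitive (@isob n n) by move=> n G H K; exact: iso_trans.
set b := Rabs beta; set K := (Rpower gamma (t 0%N) + 1)%Re; set cc := Rabs c.
have K1 : Rle 1 K by rewrite /K; have := exp_pos (t 0%N * ln gamma); rewrite /Rpower; lra.
have b0 : Rle 0 b by apply: Rabs_pos.
have c0 : Rle 0 cc by apply: Rabs_pos.
exists (b + K * (gamma + 1) * cc)%Re => n.
rewrite /unl_count (part_Ncl (isr _) (iss _) (ist _)).
case: n => [|n'].
  set S := [set G : sgraph 0 | _].
  have : (Ncl (@isob 0 0) S <= 1)%N.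
    apply: leq_trans (leq_imset_card _ _) _.
    case: (set_0Vmem S) => [-> | [G0 _]]; first by rewrite cards0.
    rewrite -(cards1 G0); apply/subset_leq_card/subsetP => H _.
    by rewrite inE (sgraph0_eq H G0).
  by move/leP/le_INR => /= h.
set n := n'.+1.
set S := [set G : sgraph n | _].
set YS := [set G : sgraph n | pb (Y n G)].
have hY : Rle (INR (Ncl (@isob n n) YS)) (b ^ n).
  have := hbeta n; rewrite /unl_count (part_Ncl (isr _) (iss _) (ist _)) => h.
  rewrite /b RPow_abs; apply: Rle_trans h _; apply: Rle_abs.
have tn : forall l0, L l0 -> Rlt (t l0) (INR n) -> (n <= l0)%N ->
  forall l, L l -> Rlt (t l) (INR n) -> (n <= l)%N -> l = l0.
  move=> l0 Ll0 tl0 nl0 l Ll tl nl.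
  case: (ltngtP l l0) => // hl; exfalso.
    apply: (tsp l l0 Ll Ll0); first by move=> e; rewrite e ltnn in hl.
    split; last exact: ltnW.
    have := le_INR _ _ (leP nl); lra.
  apply: (tsp l0 l Ll0 Ll); first by move=> e; rewrite e ltnn in hl.
  split; last exact: ltnW.
  have := le_INR _ _ (leP nl0); lra.
have main : Rle (INR (Ncl (@isob n n) S)) (b ^ n + (K * (gamma + 1) ^ n) * cc ^ n)%Re.
  have pc := pow_le cc n c0.
  have pg : Rle 0 ((gamma + 1) ^ n) by apply: pow_le; lra.
  case: (classic (exists l0, L l0 /\ Rlt (t l0) (INR n) /\ (n <= l0)%N)).
    move=> [l0 [Ll0 [tl0 nl0]]].
    have hsub : S \subset YS :|: \bigcup_(G in M l0) [set H : sgraph n | subgraphb H G].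
      apply/subsetP => H; rewrite inE => /pbP /MUchar [l [G [Ll [GM sHG]]]].
      have nl := sub_le sHG.
      case: (Rle_lt_dec (INR n) (t l)) => htl.
        rewrite inE; apply/orP; left; rewrite inE; apply/pbP.
        exact: (proj1 (Mtiny l Ll G GM)) n H erefl htl sHG.
      have e := tn l0 Ll0 tl0 nl0 l Ll htl nl; subst l0.
      by rewrite inE; apply/orP; right; apply/bigcupP; exists G => //; rewrite inE.
    have h1 : (Ncl (@isob n n) S <= Ncl (@isob n n) YS +
        Ncl (@isob n n) (\bigcup_(G in M l0) [set H : sgraph n | subgraphb H G]))%N.
      by apply: leq_trans (Ncl_sub _ hsub) (Ncl_U _ _ _).
    have h2 : (Ncl (@isob n n) S <= Ncl (@isob n n) YS +
        \sum_(G in M l0) Ncl (@isob n n) [set H : sgraph n | subgraphb H G])%N.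
      by apply: leq_trans h1 _; rewrite leq_add2l; apply: Ncl_big.
    have h3 : Rle (INR (\sum_(G in M l0) Ncl (@isob n n) [set H : sgraph n | subgraphb H G]))
                 (INR #|M l0| * cc ^ n).
      apply: sumR_le => G GM.
      have := (proj2 (Mtiny l0 Ll0 G GM)) n tl0 nl0.
      rewrite /s_k (part_Ncl (isr _) (iss _) (ist _)) => h; apply: Rle_trans h _.
      rewrite /cc RPow_abs; apply: Rle_abs.
    have h4 : Rle (INR #|M l0|) (K * (gamma + 1) ^ n).
      apply: Rle_trans (Mcard l0 Ll0) _; apply: rp_bound => //.
      exact: tmono.
    have := le_INR _ _ (leP h2); rewrite plus_INR => h5.
    have : Rle (INR #|M l0| * cc ^ n) (K * (gamma + 1) ^ n * cc ^ n)
      by apply: Rmult_le_compat_r.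
    have := pos_INR #|M l0|. nra.
  move=> nex.
  have hsub : S \subset YS.
    apply/subsetP => H; rewrite inE => /pbP /MUchar [l [G [Ll [GM sHG]]]].
    have nl := sub_le sHG.
    case: (Rle_lt_dec (INR n) (t l)) => htl.
      rewrite inE; apply/pbP.
      exact: (proj1 (Mtiny l Ll G GM)) n H erefl htl sHG.
    by exfalso; apply: nex; exists l.
  have := le_INR _ _ (leP (Ncl_sub (@isob n n) hsub)) => h.
  have : Rle 0 (K * (gamma + 1) ^ n * cc ^ n).
    apply: Rmult_le_pos => //; apply: Rmult_le_pos => //; lra.
  lra.
apply: Rle_trans main _.
have hK : Rle K (K ^ n) by have := Rle_pow K 1 n K1 (leP (isT : (1 <= n)%N)); rewrite pow_1.
have e : ((K * (gamma + 1) * cc) ^ n = K ^ n * (gamma + 1) ^ n * cc ^ n)%Re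
  by rewrite !Rpow_mult_distr.
have pc := pow_le cc n c0.
have pg : Rle 0 ((gamma + 1) ^ n) by apply: pow_le; lra.
have : Rle (K * (gamma + 1) ^ n * cc ^ n) ((K * (gamma + 1) * cc) ^ n).
  rewrite e; apply: Rmult_le_compat_r => //; apply: Rmult_le_compat_r => //.
have := @pow_add_le b (K * (gamma + 1) * cc) n b0.
have : Rle 0 (K * (gamma + 1) * cc) by apply: Rmult_le_pos => //; apply: Rmult_le_pos; lra.
move=> p h; have := h p erefl. lra.
Qed.
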